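(* Assume that for all $\emptyset\subsetneq u\subsetneq[1:p]$ we have estimators $\widehat W_u$ that converge to $W_u$ in probability (resp. almost surely) when $N_u\to+\infty$, where $\kappa N_u$ is the cost of $\widehat W_u$. If we use the subset $W$-aggregation procedure with $N_u=N_u^*:=\mathrm{Round}\big(N_{tot}\kappa^{-1}\binom{p}{|u|}^{-1}(p-1)^{-1}\big)$ for $\emptyset\subsetneq u\subsetneq[1:p]$ ($\mathrm{Round}$ = nearest integer), then the estimators of the Shapley effects converge to the Shapley effects in probability (resp. almost surely) when $N_{tot}\to+\infty$, where $N_{tot}$ is the total cost of the subset $W$-aggregation procedure.
   Context: Setting: $\mathbf{X}=(X_1,\dots,X_p)$, $Y=f(\mathbf{X})$ with $f\in L^2(\mathbb{P}_\mathbf{X})$. $W_u$ denotes either $V_u=\mathrm{Var}(\mathrm{E}(Y|\mathbf{X}_u))$ or $E_u=\mathrm{E}(\mathrm{Var}(Y|\mathbf{X}_{-u}))$ ($-u=[1:p]\setminus u$), with $W_\emptyset=0$, $W_{[1:p]}=\mathrm{Var}(Y)$ known. Shapley effects: $\eta_i=\frac{1}{p\mathrm{Var}(Y)}\sum_{u\subset -i}\binom{p-1}{|u|}^{-1}(W_{u\cup\{i\}}-W_u)$. Subset $W$-aggregation procedure: compute each $\widehat W_u$ once and set $\widehat\eta_i=\frac{1}{p\mathrm{Var}(Y)}\sum_{u\subset -i}\binom{p-1}{|u|}^{-1}(\widehat W_{u\cup\{i\}}-\widehat W_u)$. The cost is the number of evaluations of $f$. *)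

(* Defs.v *)
From HB Require Import structures.
From mathcomp Require Import all_boot all_order all_algebra.
From mathcomp Require Import all_classical all_reals all_analysis.
Set Implicit Arguments. Unset Strict Implicit. Unset Printing Implicit Defensive.
Import Order.TTheory GRing.Theory Num.Theory.
Import numFieldNormedType.Exports.
Local Open Scope classical_set_scope.
Local Open Scope ring_scope.

Definition fset0 (p : nat) : {set 'I_p} := finset.set0.
Definition fsetT (p : nat) : {set 'I_p} := finset.setTfor 'I_p.

(* Round = nearest integer (halves rounded up), for nonnegative arguments. *)
Definition round_nat (R : realType) (x : R) : nat := Num.truncn (x + 2^-1).

Definition cvg_in_prob (d : measure_display) (T : measurableType d)
  (R : realType) (P : probability T R) (X : nat -> T -> R) (Y : T -> R) : Prop :=
  forall eps : R, 0 < eps ->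
    (fun n => P [set w | eps <= `|X n w - Y w|]) @ \oo --> 0%E.

Definition cvg_as (d : measure_display) (T : measurableType d)
  (R : realType) (P : probability T R) (X : nat -> T -> R) (Y : T -> R) : Prop :=
  {ae P, forall w, (fun n => X n w) @ \oo --> Y w}.

(* Shapley effect eta_i computed from a set function W (W set0 = 0, W (fsetT p) = Var Y). *)
Definition shapley (R : realType) (p : nat) (W : {set 'I_p} -> R) (i : 'I_p) : R :=
  (p%:R * W (fsetT p))^-1 *
  \sum_(u : {set 'I_p} | i \notin u) ('C(p.-1, #|u|)%:R)^-1 * (W (i |: u) - W u).

Definition Nstar (R : realType) (p : nat) (kappa : R) (Ntot : nat) (u : {set 'I_p}) : nat :=
  round_nat (Ntot%:R / (kappa * 'C(p, #|u|)%:R * (p.-1)%:R)).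

Definition What_agg (T : Type) (R : realType) (p : nat) (VarY : R) (kappa : R)
  (What : {set 'I_p} -> nat -> T -> R) (Ntot : nat) (u : {set 'I_p}) (w : T) : R :=
  if u == fset0 p then 0
  else if u == fsetT p then VarY
  else What u (Nstar kappa Ntot u) w.

Definition shapley_hat (T : Type) (R : realType) (p : nat) (VarY kappa : R)
  (What : {set 'I_p} -> nat -> T -> R) (i : 'I_p) (Ntot : nat) (w : T) : R :=
  shapley (fun u => What_agg VarY kappa What Ntot u w) i.

(* Main.v *)
Require Import Defs.
From HB Require Import structures.
From mathcomp Require Import all_boot all_order all_algebra.
From mathcomp Require Import all_classical all_reals all_analysis.
From mathcomp Require Import ring lra.
Import Order.TTheory GRing.Theory Num.Theory.
Import numFieldNormedType.Exports.
Local Open Scope classical_set_scope.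
Local Open Scope ring_scope.
Set Implicit Arguments. Unset Strict Implicit.

Definition Kc (R : realType) (p : nat) (W : {set 'I_p} -> R) (i : 'I_p) : R :=
  1 + `|(p%:R * W (fsetT p))^-1| *
      \sum_(u : {set 'I_p} | i \notin u) (('C(p.-1, #|u|)%:R)^-1 * 2).

Lemma Kc_gt0 (R : realType) (p : nat) (W : {set 'I_p} -> R) i : 0 < Kc W i.
Proof.
rewrite /Kc ltr_pwDl // mulr_ge0 // sumr_ge0 // => u _.
Qed.

Lemma shapley_diff (R : realType) (p : nat) (Z W : {set 'I_p} -> R) i :
  Z (fsetT p) = W (fsetT p) ->
  `|shapley Z i - shapley W i| <= Kc W i * \sum_v `|Z v - W v|.
Proof.
move=> ZT.
set S := \sum_v `|Z v - W v|.
have S0 : 0 <= S by rewrite sumr_ge0.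
have hS : forall v, `|Z v - W v| <= S.
  by move=> v; rewrite /S (bigD1 v) //= lerDl sumr_ge0.
rewrite /shapley ZT -mulrBr -sumrB normrM /Kc mulrDl mul1r.
apply: le_trans (_ : _ <= `|(p%:R * W (fsetT p))^-1| *
      (\sum_(u : {set 'I_p} | i \notin u) (('C(p.-1, #|u|)%:R)^-1 * 2)) * S) _; last by rewrite lerDr.
rewrite -mulrA; apply: ler_wpM2l => //.
rewrite mulr_suml; apply: le_trans (ler_norm_sum _ _ _) _.
apply: ler_sum => u _.
rewrite -mulrBr normrM ger0_norm ?invr_ge0 // -mulrA; apply: ler_wpM2l; first by rewrite invr_ge0.
rewrite opprD addrACA -opprD mulr2n mulrDl !mul1r.
apply: le_trans (ler_normB _ _) _.
by apply: lerD.

Qed.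
Lemma Nstar_cvg (R : realType) (p : nat) (kappa : R) (u : {set 'I_p}) :
  (2 <= p)%N -> 0 < kappa ->
  Nstar kappa n u @[n --> \oo] --> \oo.
Proof.
move=> p2 k0; apply/cvgnyPgey; near=> A.
set a := kappa * 'C(p, #|u|)%:R * (p.-1)%:R.
have a0 : 0 < a.
  have hc : (#|u| <= p)%N by rewrite -[X in (_ <= X)%N]card_ord max_card.
  rewrite /a !mulr_gt0 // ltr0n ?bin_gt0 //.
  by case: p p2 {u hc a} => [|[|p]].
have := nbhs_infty_ge (Num.truncn (A%:R * a)).+1.
apply: filterS => n hn.
rewrite /Nstar /round_nat truncn_ge_nat; last first.
  by rewrite addr_ge0 // divr_ge0 // ltW.
have h1 : A%:R * a <= n%:R.
  apply: ltW; apply: lt_le_trans (truncnS_gt _) _.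
  by rewrite ler_nat.
have h2 : A%:R <= n%:R / a by rewrite ler_pdivlMr.
by rewrite -/a; apply: (le_trans h2); rewrite lerDl invr_ge0.
Unshelve. all: by end_near.
Qed.

Lemma cvg_sumr (R : realType) (J : Type) (r : seq J) (f : J -> nat -> R) (l : J -> R) :
  (forall j, f j n @[n --> \oo] --> l j) ->
  \sum_(j <- r) f j n @[n --> \oo] --> \sum_(j <- r) l j.
Proof.
move=> H; elim: r => [|x r IH].
  under eq_fun do rewrite big_nil. rewrite big_nil; exact: cvg_cst.
under eq_fun do rewrite big_cons. rewrite big_cons.
exact: cvgD.
Qed.

Lemma meas_ge_set (d : measure_display) (T : measurableType d) (R : realType)
  (g : T -> R) (e c : R) :
  measurable_fun setT g -> measurable [set w | e <= `|g w - c|].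
Proof.
move=> mg.
have mg' : measurable_fun setT (fun w => `|g w - c|).
  exact: (measurableT_comp (@measurable_realfun.normr_measurable R setT) (measurable_realfun.measurable_funB mg (measurable_cst c))).
have := mg' measurableT _ (measurable_itv `[e, +oo[).
rewrite setTI.
rewrite (_ : [set w | e <= `|g w - c|] = (fun w => `|g w - c|) @^-1` `[e, +oo[) //.
by apply/seteqP; split => w /=; rewrite in_itv /= andbT.
Qed.

Section Agg.
Variables (d : measure_display) (T : measurableType d) (R : realType).
Variables (p : nat) (W : {set 'I_p} -> R) (kappa : R)
  (What : {set 'I_p} -> nat -> T -> R).
Hypothesis p2 : (2 <= p)%N.
Hypothesis W0 : W (fset0 p) = 0.

Lemma fsetT_neq0 : fsetT p != fset0 p.
Proof.
apply/eqP => h.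
have : (Ordinal (ltnW p2) \in fsetT p) by rewrite /fsetT inE.
by rewrite h /fset0 inE.
Qed.

Lemma WaggT n w : What_agg (W (fsetT p)) kappa What n (fsetT p) w = W (fsetT p).
Proof. by rewrite /What_agg (negbTE fsetT_neq0) eqxx. Qed.

Lemma What_agg_E v n w :
  What_agg (W (fsetT p)) kappa What n v w - W v =
  if (v == fset0 p) || (v == fsetT p) then 0 else What v (Nstar kappa n v) w - W v.
Proof.
rewrite /What_agg; have [->|h0] := eqVneq v (fset0 p).
  by rewrite W0 subrr.
have [->|h1] := eqVneq v (fsetT p).
  by rewrite orbT subrr.
by [].
Qed.

Hypothesis mWhat : forall u N, measurable_fun setT (What u N).

Lemma meas_Wagg n v : measurable_fun setT (What_agg (W (fsetT p)) kappa What n v).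
Proof.
rewrite /What_agg; case: (v == fset0 p); first exact: measurable_cst.
case: (v == fsetT p); first exact: measurable_cst.
exact: mWhat.
Qed.

Lemma meas_shat i n : measurable_fun setT (shapley_hat (W (fsetT p)) kappa What i n).
Proof.
have -> : shapley_hat (W (fsetT p)) kappa What i n = fun w =>
   (p%:R * W (fsetT p))^-1 * \sum_(u <- index_enum {set 'I_p})
     (if i \notin u then ('C(p.-1, #|u|)%:R)^-1 *
        (What_agg (W (fsetT p)) kappa What n (i |: u) w -
         What_agg (W (fsetT p)) kappa What n u w) else 0).
  by apply/funext => w; rewrite /shapley_hat /shapley WaggT big_mkcond.
apply: measurable_realfun.measurable_funM; first exact: measurable_cst.
apply: measurable_sum => u.
case: (i \notin u); last exact: measurable_cst.
apply: measurable_realfun.measurable_funM; first exact: measurable_cst.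
by apply: measurable_realfun.measurable_funB; apply: meas_Wagg.
Qed.

End Agg.

Theorem proposition4 (d : measure_display) (T : measurableType d) (R : realType)
  (P : probability T R) (p : nat) (W : {set 'I_p} -> R) (kappa : R)
  (What : {set 'I_p} -> nat -> T -> R) :
  (2 <= p)%N -> 0 < kappa -> W (fset0 p) = 0 -> 0 < W (fsetT p) ->
  (forall u N, measurable_fun setT (What u N)) ->
  ((forall u : {set 'I_p}, u != fset0 p -> u != fsetT p ->
      cvg_in_prob P (What u) (fun _ => W u)) ->
   forall i : 'I_p,
      cvg_in_prob P (shapley_hat (W (fsetT p)) kappa What i) (fun _ => shapley W i))
  /\
  ((forall u : {set 'I_p}, u != fset0 p -> u != fsetT p ->
      cvg_as P (What u) (fun _ => W u)) ->
   forall i : 'I_p,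
      cvg_as P (shapley_hat (W (fsetT p)) kappa What i) (fun _ => shapley W i)).
Proof.
move=> p2 k0 W0 WT mWhat; split.
  move=> H i eps e0.
  set s := index_enum {set 'I_p}.
  set m := size s.
  have m0 : (0 < m)%N.
    rewrite lt0n size_eq0; apply/eqP => e.
    by have := mem_index_enum (fset0 p); rewrite -/s e.
  set K := Kc W i.
  have K0 : 0 < K by exact: Kc_gt0.
  set delta := eps / (K * m%:R).
  have d0 : 0 < delta by rewrite divr_gt0 // mulr_gt0 // ltr0n.
  set B := fun n k => [set w | delta <= `|What_agg (W (fsetT p)) kappa What n (nth (fset0 p) s k) w - W (nth (fset0 p) s k)|].
  have mB : forall n k, measurable (B n k).
    by move=> n k; apply: meas_ge_set; apply: meas_Wagg.
  have mA : forall n, measurable [set w | eps <= `|shapley_hat (W (fsetT p)) kappa What i n w - shapley W i|].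
    by move=> n; apply: meas_ge_set; apply: meas_shat.
  apply: (@squeeze_cvge _ _ _ _ (fun _ => 0%E) _ (fun n => \sum_(k < m) P (B n k))).
  - near=> n; apply/andP; split; first exact: measure_ge0.
    apply: le_trans (Boole_inequality P (fun k _ => mB n k)).
    apply: le_measure; rewrite ?inE //; first exact: bigsetU_measurable.
    move=> w /= hw; rewrite -bigcup_mkord.
    apply: contrapT => hno.
    have hlt : forall k, (k < m)%N -> `|What_agg (W (fsetT p)) kappa What n (nth (fset0 p) s k) w - W (nth (fset0 p) s k)| < delta.
      move=> k km; rewrite ltNge; apply/negP => hk; apply: hno; exists k => //.
    have := le_trans hw (shapley_diff i (WaggT W kappa What p2 n w)).
    rewrite (big_nth (fset0 p)) big_mkord -/s -/m -/K.
    have hs : \sum_(k < m) `|What_agg (W (fsetT p)) kappa What n (nth (fset0 p) s k) w - W (nth (fset0 p) s k)| < \sum_(k < m) delta.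
      apply: ltr_sum; last by move=> k _; apply: hlt.
      by apply/hasP; exists (Ordinal m0); [exact: mem_index_enum|].
    rewrite sumr_const card_ord -mulr_natr in hs.
    have hK : K * (delta * m%:R) = eps.
      rewrite /delta; field; rewrite pnatr_eq0 -lt0n m0 gt_eqF //=.
    move=> h; have h2 := hs; rewrite -(ltr_pM2l K0) hK in h2.
    by have := le_lt_trans h h2; rewrite ltxx.
  - exact: cvg_cst.
  - rewrite [X in _ --> X](_ : _ = \sum_(k < m) (0%E : \bar R)); last by rewrite big1.
    apply: cvg_nnesum => k _; first by apply: nearW => n; exact: measure_ge0.
    set v := nth (fset0 p) s k.
    case: (boolP ((v == fset0 p) || (v == fsetT p))) => [hv|].
      have -> : (fun n => P (B n k)) = fun _ => 0%E.
        apply/funext => n; rewrite /B -/v (_ : [set w | _] = set0) ?measure0 //.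
        apply/seteqP; split => w //=; rewrite What_agg_E // hv normr0 => h.
        by have := lt_le_trans d0 h; rewrite ltxx.
      exact: cvg_cst.
    rewrite negb_or => /andP[h0 h1].
    have -> : (fun n => P (B n k)) = (fun N => P [set w | delta <= `|What v N w - W v|]) \o (fun n => Nstar kappa n v).
      apply/funext => n /=; congr (P _); apply/seteqP; split => w /=; rewrite /B /= -/v What_agg_E // (negbTE h0) (negbTE h1) //.
    exact: cvg_comp (Nstar_cvg v p2 k0) (H v h0 h1 delta d0).
move=> H i.
have : {ae P, forall w, forall v : {set 'I_p}, v != fset0 p -> v != fsetT p ->
    (fun n => What v n w) @ \oo --> W v}.
  apply: filter_forall => v.
  have [->|h0] := eqVneq v (fset0 p); first by apply: nearW => w /negP.
  have [->|h1] := eqVneq v (fsetT p); first by apply: nearW => w _ /negP.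
  by apply: filterS (H v h0 h1) => w hw _ _.
apply: filterS => w Hw.
set S := fun n => \sum_(v : {set 'I_p}) `|What_agg (W (fsetT p)) kappa What n v w - W v|.
have hS : S n @[n --> \oo] --> 0.
  rewrite /S [X in _ --> X](_ : _ = \sum_(v : {set 'I_p}) (0:R)); last by rewrite big1.
  apply: cvg_sumr => v.
  under eq_fun do rewrite What_agg_E //.
  case: (boolP ((v == fset0 p) || (v == fsetT p))) => [_|]; first by rewrite normr0; exact: cvg_cst.
  rewrite negb_or => /andP[h0 h1].
  rewrite -(@normr0 _ R) -(subrr (W v)); apply: cvg_norm; apply: cvgB; last exact: cvg_cst.
  exact: cvg_comp (Nstar_cvg v p2 k0) (Hw v h0 h1).
apply: (@squeeze_cvgr _ _ _ _ (fun n => shapley W i - Kc W i * S n)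
    (fun n => shapley W i + Kc W i * S n)).
- near=> n; rewrite -ler_distl; apply: shapley_diff.
  exact: WaggT.
- rewrite -[X in _ --> X]subr0 -(mulr0 (Kc W i)).
  by apply: cvgB; [exact: cvg_cst| apply: cvgM; [exact: cvg_cst|exact: hS]].
- rewrite -[X in _ --> X]addr0 -(mulr0 (Kc W i)).
  by apply: cvgD; [exact: cvg_cst| apply: cvgM; [exact: cvg_cst|exact: hS]].
Unshelve. all: by end_near.
Qed.
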